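(* Let $p=2$, and let $F$, $K=F(\sqrt{a})$, $G=\langle\sigma\rangle$, $J$ and $N$ be as in the context. Then, as an $\mathbb{F}_2[G]$-module, $J$ decomposes as an internal direct sum $$J=X\oplus Y\oplus Z,$$ where (1) $X$ has $\mathbb{F}_2$-dimension $1$ if $-1\in N(K^\times)$, and $X=\{0\}$ otherwise; (2) $Y$ is a free $\mathbb{F}_2[G]$-submodule with $Y^G=N(J)$; (3) $Z$ is a trivial $\mathbb{F}_2[G]$-module. Moreover, the rank of any maximal free $\mathbb{F}_2[G]$-submodule of $J$ equals $\dim_{\mathbb{F}_2}N(J)$.
   Context: Let $F$ be a field of characteristic different from $2$. Let $a\in F^\times\setminus F^{\times 2}$ and $K=F(\sqrt{a})$, a quadratic extension; $K^\times=K\setminus\{0\}$. Let $G=\mathrm{Gal}(K/F)=\langle\sigma\rangle$ with $\sigma(\sqrt a)=-\sqrt a$. Let $J=K^\times/K^{\times 2}$, an $\mathbb{F}_2[G]$-module (elements denoted $[\gamma]$, $\gamma\in K^\times$). For a $G$-module $V$, $V^G$ denotes the submodule of $G$-fixed elements. Let $N=1+\sigma\in\mathbb{F}_2[G]$, also viewed as the endomorphism of $J$ it induces; $N(J)$ is its image. $N(K^\times)\subseteq F^\times$ denotes the group of norms from $K$ to $F$. *)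

(* Defs.v *)
From HB Require Import structures.
From mathcomp Require Import all_boot all_order all_algebra all_field.
From mathcomp Require Import boolp classical_sets cardinality.
Set Implicit Arguments. Unset Strict Implicit. Unset Printing Implicit Defensive.
Import GRing.Theory.
Local Open Scope classical_set_scope.
Local Open Scope ring_scope.

(* J = K^x / K^x2 is modelled inside K: a subset of J is represented by its
   preimage in K^x, a subset S : set K of nonzero elements that is a union of
   classes mod K^x2.  The F_2-structure of J is written multiplicatively. *)
Section JDefs.
Variables (K : fieldType) (sigma : K -> K).

(* x is a nonzero square, i.e. [x] = 0 in J *)
Definition sq (x : K) : Prop := exists y : K, y != 0 /\ x = y ^+ 2.

Definition subspJ (S : set K) : Prop :=
  [/\ (forall x, S x -> x != 0),
      (forall y, sq y -> S y) &
      (forall x y, S x -> S y -> S (x * y))].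

Definition submodJ (S : set K) : Prop := subspJ S /\ (forall x, S x -> S (sigma x)).

Definition inB (B : set K) (s : seq K) : Prop := forall b, b \in s -> B b.

Definition indepJ (B : set K) : Prop :=
  forall s : seq K, uniq s -> inB B s -> sq (\prod_(b <- s) b) -> s = [::].

Definition spanJ (B : set K) (x : K) : Prop :=
  exists s : seq K, inB B s /\ sq (x / \prod_(b <- s) b).

(* B is (a set of representatives of) an F_2-basis of S *)
Definition F2basis (S B : set K) : Prop :=
  [/\ B `<=` S, indepJ B & forall x, S x -> spanJ B x].

(* B is an F_2[G]-basis of S: the family ([b], sigma[b])_{b in B} is an
   F_2-basis of S. *)
Definition freebasis (S B : set K) : Prop :=
  [/\ B `<=` S,
      (forall s t : seq K, uniq s -> uniq t -> inB B s -> inB B t ->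
          sq ((\prod_(b <- s) b) * \prod_(b <- t) sigma b) -> s = [::] /\ t = [::]) &
      (forall x, S x -> exists s t : seq K, [/\ inB B s, inB B t &
          sq (x / ((\prod_(b <- s) b) * \prod_(b <- t) sigma b))])].

Definition freeJ (S : set K) : Prop := submodJ S /\ exists B, freebasis S B.

Definition maxfreeJ (S : set K) : Prop :=
  freeJ S /\ forall S', freeJ S' -> S `<=` S' -> S' = S.

Definition dsum3 (X Y Z : set K) : Prop :=
  (forall g : K, g != 0 -> exists x y z, [/\ X x, Y y, Z z & g = x * y * z])
  /\ (forall x y z, X x -> Y y -> Z z -> sq (x * y * z) -> [/\ sq x, sq y & sq z]).

Definition zeroJ (S : set K) : Prop := forall x, S x -> sq x.

Definition fixedJ (S : set K) : set K := [set x | S x /\ sq (sigma x / x)].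

(* N(J), the image of N = 1 + sigma on J *)
Definition NJ : set K :=
  [set x | exists g : K, g != 0 /\ sq (x / (g * sigma g))].

Definition trivialJ (S : set K) : Prop := forall x, S x -> sq (sigma x / x).

Definition minus1_norm : Prop := exists g : K, g != 0 /\ g * sigma g = -1.

End JDefs.

(* Main.v *)
Require Import Defs.
From HB Require Import structures.
From mathcomp Require Import all_boot all_order all_algebra all_field.
From mathcomp Require Import boolp classical_sets cardinality.
From mathcomp Require Import ring functions.
Local Open Scope card_scope.
Set Implicit Arguments. Unset Strict Implicit. Unset Printing Implicit Defensive.
Import GRing.Theory.
Local Open Scope classical_set_scope.
Local Open Scope ring_scope.
Section Sq.
Variable K : fieldType.
Implicit Types (x y z : K) (B C D S V : set K) (f g : K -> K).

Lemma sq_neq0 x : sq x -> x != 0.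
Proof. by case=> y [y0 ->]; rewrite expf_neq0. Qed.

Lemma sq1 : sq (1 : K).
Proof. by exists 1; rewrite oner_neq0 expr1n. Qed.

Lemma sqM x y : sq x -> sq y -> sq (x * y).
Proof.
case=> u [u0 ->] [v [v0 ->]]; exists (u * v); split; first by rewrite mulf_neq0.
by rewrite exprMn.
Qed.

Lemma sqV x : sq x -> sq x^-1.
Proof.
case=> u [u0 ->]; exists u^-1; split; first by rewrite invr_eq0.
by rewrite exprVn.
Qed.

Lemma sqD x y : sq x -> sq y -> sq (x / y).
Proof. by move=> hx hy; apply: sqM => //; apply: sqV. Qed.

Lemma sqX2 x : x != 0 -> sq (x ^+ 2).
Proof. by move=> x0; exists x. Qed.

Lemma sq_cancel x y : sq x -> sq (x * y) -> sq y.
Proof.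
move=> hx hxy; have x0 := sq_neq0 hx.
by have := sqD hxy hx; rewrite mulrC mulKf.
Qed.

Lemma sq_eq x y : x = y -> sq x -> sq y.
Proof. by move->. Qed.

Lemma sq_prod (s : seq K) f : (forall b, b \in s -> sq (f b)) ->
  sq (\prod_(b <- s) f b).
Proof.
elim: s => [|b s IH] h; first by rewrite big_nil; apply: sq1.
rewrite big_cons; apply: sqM; first by apply: h; rewrite mem_head.
by apply: IH => c cs; apply: h; rewrite in_cons cs orbT.
Qed.

Lemma prod_neq0 (s : seq K) f : (forall b, b \in s -> f b != 0) ->
  \prod_(b <- s) f b != 0.
Proof.
elim: s => [|b s IH] h; first by rewrite big_nil oner_neq0.
rewrite big_cons mulf_neq0 //; first by apply: h; rewrite mem_head.
by apply: IH => c cs; apply: h; rewrite in_cons cs orbT.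
Qed.

Lemma prod_cat (s t : seq K) f :
  \prod_(b <- s ++ t) f b = (\prod_(b <- s) f b) * \prod_(b <- t) f b.
Proof. by rewrite big_cat. Qed.

Definition indepV V B f := forall s : seq K, uniq s -> inB B s ->
  V (\prod_(b <- s) f b) -> s = [::].
Definition spanV V B f y := exists s : seq K, inB B s /\ V (y / \prod_(b <- s) f b).

Definition nzon B f := forall b, B b -> f b != 0.

Lemma inB_cons B b s : inB B (b :: s) -> B b /\ inB B s.
Proof.
move=> h; split; first by apply: h; rewrite mem_head.
by move=> c cs; apply: h; rewrite in_cons cs orbT.
Qed.

Lemma inB_sub B s t : {subset s <= t} -> inB B t -> inB B s.
Proof. by move=> st h b /st; apply: h. Qed.

Lemma inB_nz B f s : nzon B f -> inB B s -> \prod_(b <- s) f b != 0.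
Proof. by move=> nz h; apply: prod_neq0 => b /h; apply: nz. Qed.

Lemma inB_cat B s t : inB B s -> inB B t -> inB B (s ++ t).
Proof. by move=> hs ht b; rewrite mem_cat => /orP[/hs|/ht]. Qed.

Lemma indep_perm B f : indepV (@sq K) B f -> nzon B f ->
  forall s t, uniq s -> uniq t -> inB B s -> inB B t ->
  sq (\prod_(b <- s) f b * \prod_(b <- t) f b) -> perm_eq s t.
Proof.
move=> ind nz; elim=> [|b s IH] t us ut Bs Bt.
  rewrite big_nil mul1r => /ind -/(_ ut Bt) ->; exact: perm_refl.
move: us => /= /andP[bs us]; have [Bb Bs'] := inB_cons Bs.
case: (boolP (b \in t)) => bt.
  have pt := perm_to_rem bt.
  have -> : \prod_(j <- t) f j = f b * \prod_(j <- rem b t) f j.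
    by rewrite (perm_big _ pt) big_cons.
  rewrite big_cons => hsq.
  have hb := nz _ Bb.
  have : sq (\prod_(b <- s) f b * \prod_(b <- rem b t) f b).
    apply: (sq_cancel (sqX2 hb)); apply: sq_eq hsq.
    by rewrite expr2; ring.
  move=> /(IH (rem b t) us (rem_uniq _ ut) Bs' (inB_sub (@mem_rem _ b _) Bt)) p.
  rewrite perm_sym; apply: (perm_trans pt); by rewrite perm_cons perm_sym.
move=> hsq; have : perm_eq s (b :: t).
  apply: IH => //; first by rewrite /= bt ut.
    by move=> c; rewrite in_cons => /orP[/eqP->|/Bt].
  by apply: sq_eq hsq; rewrite !big_cons; ring.
by move/perm_mem => /(_ b); rewrite mem_head (negbTE bs).
Qed.

Lemma normalize B f s : nzon B f -> inB B s -> exists u, [/\ uniq u, inB B u,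
  {subset u <= s} & sq (\prod_(b <- s) f b / \prod_(b <- u) f b)].
Proof.
move=> nz; elim: s => [|b s IH] Bs.
  exists [::]; split => //; rewrite big_nil divr1; exact: sq1.
have [Bb Bs'] := inB_cons Bs.
have [u [uu Bu su hu]] := IH Bs'.
have hb := nz _ Bb; have hs := inB_nz nz Bs'; have hU := inB_nz nz Bu.
case: (boolP (b \in u)) => bu.
  have pt := perm_to_rem bu.
  exists (rem b u); split.
  - exact: rem_uniq.
  - exact: inB_sub (@mem_rem _ b _) Bu.
  - by move=> c /mem_rem /su cs; rewrite in_cons cs orbT.
  have hR : \prod_(c <- rem b u) f c != 0.
    by apply: inB_nz nz (inB_sub (@mem_rem _ b _) Bu).
  have eU : \prod_(j <- u) f j = f b * \prod_(j <- rem b u) f j.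
    by rewrite (perm_big _ pt) big_cons.
  move: hu; rewrite eU => hu.
  apply: sq_eq (sqM hu (sqX2 hb)); rewrite big_cons; field.
  by rewrite hb hR.
exists (b :: u); split.
- by rewrite /= bu uu.
- by move=> c; rewrite in_cons => /orP[/eqP->|/Bu].
- by move=> c; rewrite !in_cons => /orP[->|/su->] //; rewrite orbT.
apply: sq_eq hu; rewrite !big_cons; field; by rewrite hb hU.
Qed.

End Sq.
Section Zorn.
Variable K : fieldType.
Implicit Types (x y z : K) (B C D S V : set K) (f g : K -> K).

Definition Vok V := (forall y, sq y -> V y) /\ (forall x y, V x -> V y -> V (x / y)).

Lemma chain_fin (F : set (set K)) (s : seq K) : total_on F subset ->
  inB (\bigcup_(X in F) X) s -> s = [::] \/ exists X, F X /\ inB X s.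
Proof.
move=> tot; elim: s => [|b s IH] h; first by left.
right; have [[Xb FXb Xbb] hs] := inB_cons h.
case: (IH hs) => [->|[X [FX Xs]]].
  by exists Xb; split => // c; rewrite inE => /eqP->.
have [XbX|XXb] := tot _ _ FXb FX.
  exists X; split => // c; rewrite in_cons => /orP[/eqP->|/Xs //].
  by apply: XbX.
exists Xb; split => // c; rewrite in_cons => /orP[/eqP->//|/Xs].
by apply: XXb.
Qed.

Lemma indep_add V D f x : Vok V -> nzon D f -> indepV V D f ->
  ~ spanV V D f (f x) -> indepV V (D `|` [set x]) f.
Proof.
move=> [Vsq Vdiv] nz ind nsp s us Bs hV.
case: (boolP (x \in s)) => xs.
  have pt := perm_to_rem xs.
  have Dr : inB D (rem x s).
    move=> c; rewrite (mem_rem_uniq _ us) inE => /andP[cx cs].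
    by case: (Bs _ cs) => // /= /eqP; rewrite (negbTE cx).
  exfalso; apply: nsp; exists (rem x s); split => //.
  have hR := inB_nz nz Dr.
  have eP : \prod_(j <- s) f j = f x * \prod_(j <- rem x s) f j.
    by rewrite (perm_big _ pt) big_cons.
  have -> : f x / \prod_(j <- rem x s) f j =
    \prod_(j <- s) f j / (\prod_(j <- rem x s) f j) ^+ 2 by rewrite eP; field.
  exact: (Vdiv _ _ hV (Vsq _ (sqX2 hR))).
apply: ind => // c cs; case: (Bs _ cs) => // /= ceq; by rewrite -ceq cs in xs.
Qed.

Lemma zorn_basis V S f : Vok V -> nzon S f ->
  exists D, [/\ D `<=` S, indepV V D f & forall x, S x -> spanV V D f (f x)].
Proof.
move=> Vk nz.
pose P := fun D => D `<=` S /\ indepV V D f.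
have : exists A, P A /\ forall B, A `<` B -> ~ P B.
  apply: Zorn_bigcup => F FP tot; split.
    by move=> x [X FX Xx]; case: (FP _ FX) => + _; apply.
  move=> s us Bs hV; case: (chain_fin tot Bs) => [//|[X [FX Xs]]].
  by case: (FP _ FX) => _ ind; apply: ind.
move=> [D [[DS ind] mx]]; exists D; split => // x Sx.
apply: contrapT => nsp.
have xD : ~ D x.
  move=> Dx; apply: nsp; exists [:: x]; split; first by move=> c; rewrite inE => /eqP->.
  rewrite big_seq1 divff; last by apply: nz.
  by case: Vk => + _; apply; apply: sq1.
apply: (mx (D `|` [set x])).
  split; first by move=> y Dy; left.
  by move=> /(_ x (or_intror erefl)).
split; first by move=> y [/DS|-> //].
apply: indep_add => //; by move=> b /DS; apply: nz.
Qed.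

End Zorn.
Section Main.
Variables (K : fieldType) (sg : {rmorphism K -> K}).
Hypothesis sgK : forall x, sg (sg x) = x.
Implicit Types (x y z g : K) (B C D S V : set K) (f : K -> K).

Definition Nm x := x * sg x.

Lemma sg_eq0 x : (sg x == 0) = (x == 0).
Proof. exact: fmorph_eq0. Qed.

Lemma sg_sq x : sq x -> sq (sg x).
Proof.
case=> y [y0 ->]; exists (sg y); split; first by rewrite sg_eq0.
by rewrite rmorphXn.
Qed.

Lemma Nm_sg x : Nm (sg x) = Nm x.
Proof. by rewrite /Nm sgK mulrC. Qed.

Lemma sg_Nm x : sg (Nm x) = Nm x.
Proof. by rewrite /Nm rmorphM sgK mulrC. Qed.

Lemma NmM x y : Nm (x * y) = Nm x * Nm y.
Proof. by rewrite /Nm rmorphM; ring. Qed.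

Lemma NmV x : Nm (x^-1) = (Nm x)^-1.
Proof. by rewrite /Nm fmorphV invfM. Qed.

Lemma Nm_eq0 x : (Nm x == 0) = (x == 0).
Proof. by rewrite /Nm mulf_eq0 sg_eq0 orbb. Qed.

Lemma Nm_sq x : sq x -> sq (Nm x).
Proof. by move=> h; apply: sqM => //; apply: sg_sq. Qed.

Lemma Nm_prod (s : seq K) f : Nm (\prod_(b <- s) f b) = \prod_(b <- s) Nm (f b).
Proof.
elim: s => [|b s IH]; first by rewrite !big_nil /Nm rmorph1 mulr1.
by rewrite !big_cons NmM IH.
Qed.

Lemma sg_prod (s : seq K) f : sg (\prod_(b <- s) f b) = \prod_(b <- s) sg (f b).
Proof. exact: rmorph_prod. Qed.

Lemma sq_div_nz x y : sq (x / y) -> x != 0.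
Proof. by move/sq_neq0; apply: contraNneq => ->; rewrite mul0r. Qed.

Lemma sq_div2 x1 x2 z1 z2 : sq (x1 / z1) -> sq (x2 / z2) -> sq ((x1 * x2) / (z1 * z2)).
Proof. by move=> h1 h2; apply: sq_eq (sqM h1 h2); rewrite invfM; ring. Qed.

Lemma alg3 (y S T U V : K) : S != 0 -> T != 0 -> U != 0 -> V != 0 ->
  y / (U * V) = y / (S * T) * (S / U) * (T / V).
Proof. by move=> *; field; apply/and4P. Qed.

Lemma alg2 (a b : K) : a != 0 -> b != 0 -> a / (a / b) = b.
Proof. by move=> *; field; apply/andP. Qed.

Lemma NmD x y : Nm (x / y) = Nm x / Nm y.
Proof. by rewrite NmM NmV. Qed.

Lemma sq_sgdiv x y : sq (x / y) -> sq (sg x / sg y).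
Proof. by move/sg_sq; rewrite rmorphM fmorphV. Qed.

Lemma NJ_sq x : sq x -> NJ sg x.
Proof. by move=> h; exists 1; rewrite oner_neq0 rmorph1 !mulr1 divr1. Qed.

Lemma NJ_nz x : NJ sg x -> x != 0.
Proof. by case=> g [_ /sq_div_nz]. Qed.

Lemma NJ_Nm g : g != 0 -> NJ sg (Nm g).
Proof. by move=> g0; exists g; split => //; rewrite divff ?Nm_eq0 //; exact: sq1. Qed.

Lemma NJ_M x y : NJ sg x -> NJ sg y -> NJ sg (x * y).
Proof.
case=> g [g0 hg] [h [h0 hh]]; exists (g * h); split; first by rewrite mulf_neq0.
by apply: sq_eq (sq_div2 hg hh); rewrite rmorphM; congr (_ / _); ring.
Qed.

Lemma NJ_V x : NJ sg x -> NJ sg x^-1.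
Proof.
case=> g [g0 hg]; exists g^-1; split; first by rewrite invr_eq0.
by apply: sq_eq (sqV hg); rewrite fmorphV !invfM invrK.
Qed.

Lemma NJ_D x y : NJ sg x -> NJ sg y -> NJ sg (x / y).
Proof. by move=> hx hy; apply: NJ_M => //; apply: NJ_V. Qed.

Lemma NJ_sqM x y : NJ sg x -> sq (y / x) -> NJ sg y.
Proof.
move=> hx hyx; have x0 := NJ_nz hx.
by have := NJ_M hx (NJ_sq hyx); rewrite mulrC divfK.
Qed.

Lemma NJ_fixed x : NJ sg x -> sq (sg x / x).
Proof.
case=> g [g0 hg]; have := sq_sgdiv hg; rewrite rmorphM sgK (mulrC (sg g)) => h.
have hn : g * sg g != 0 by rewrite mulf_neq0 ?sg_eq0.
have -> : sg x / x = (sg x / (g * sg g)) / (x / (g * sg g)).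
  by rewrite invf_div mulrA divfK.
exact: sqD.
Qed.

Variable B : set K.
Hypothesis Bnz : forall b, B b -> b != 0.
Hypothesis Bind : indepV (@sq K) B Nm.
Hypothesis Bspan : forall g, g != 0 -> spanV (@sq K) B Nm (Nm g).

Lemma BnzNm : nzon B Nm.
Proof. by move=> b /Bnz; rewrite -Nm_eq0. Qed.
Lemma Bnzid : nzon B id.
Proof. exact: Bnz. Qed.
Lemma Bnzsg : nzon B sg.
Proof. by move=> b /Bnz; rewrite -sg_eq0. Qed.

Definition Y : set K := [set y | exists s t : seq K, [/\ inB B s, inB B t &
          sq (y / ((\prod_(b <- s) b) * \prod_(b <- t) sg b))]].

Lemma Y_uniq y : Y y -> exists s t : seq K, [/\ uniq s, uniq t, inB B s, inB B t &
          sq (y / ((\prod_(b <- s) b) * \prod_(b <- t) sg b))].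
Proof.
case=> s [t [Bs Bt h]].
have [u [uu Bu _ hu]] := normalize Bnzid Bs.
have [v [uv Bv _ hv]] := normalize Bnzsg Bt.
exists u, v; split => //.
have hU := inB_nz Bnzid Bu; have hV := inB_nz Bnzsg Bv.
have hS := inB_nz Bnzid Bs; have hT := inB_nz Bnzsg Bt.
by rewrite (alg3 _ hS hT hU hV); apply: sqM; [apply: sqM|].
Qed.

Lemma Nm_Yrep (s t : seq K) :
  Nm ((\prod_(b <- s) b) * \prod_(b <- t) sg b) =
  (\prod_(b <- s) Nm b) * \prod_(b <- t) Nm b.
Proof.
rewrite NmM !Nm_prod; congr (_ * _); apply: eq_bigr => b _; exact: Nm_sg.
Qed.

Lemma NJ_Y y : NJ sg y -> Y y.
Proof.
case=> g [g0 hg]; have [s [Bs hs]] := Bspan g0.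
exists s, s; split => //.
have hS := inB_nz BnzNm Bs.
have -> : (\prod_(b <- s) b) * \prod_(b <- s) sg b = \prod_(b <- s) Nm b.
  by rewrite -big_split.
have hN : Nm g != 0 by rewrite Nm_eq0.
apply: sq_eq (sqM hg hs); rewrite -[g * sg g]/(Nm g); field.
by rewrite hN hS.
Qed.

Lemma Y_fixed y : Y y -> sq (Nm y) -> NJ sg y.
Proof.
move=> /Y_uniq [s [t [us ut Bs Bt h]]] hN.
have hS := inB_nz Bnzid Bs; have hT := inB_nz Bnzsg Bt.
have y0 : y != 0 by apply: sq_div_nz h.
have hNr := Nm_sq h.
have w0 : (\prod_(b <- s) b) * \prod_(b <- t) sg b != 0 by rewrite mulf_neq0.
have : sq ((\prod_(b <- s) Nm b) * \prod_(b <- t) Nm b).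
  rewrite -Nm_Yrep; have := sqD hN hNr; rewrite NmD alg2 //; rewrite Nm_eq0 //.
move=> /(indep_perm Bind BnzNm us ut Bs Bt) p.
apply: (NJ_sqM (x := Nm (\prod_(b <- s) b))).
  exact: NJ_Nm hS.
have -> : Nm (\prod_(b <- s) b) = (\prod_(b <- s) b) * \prod_(b <- t) sg b.
  by rewrite /Nm; congr (_ * _); rewrite sg_prod; apply: perm_big.
exact: h.
Qed.

Lemma alg4 (a b c : K) : b != 0 -> a / c = a / b * (b / c).
Proof. by move=> b0; rewrite mulrA divfK. Qed.

Lemma nm_of_fixed x : x != 0 -> sq (sg x / x) -> sq (Nm x).
Proof.
move=> x0 h; have -> : Nm x = x ^+ 2 * (sg x / x) by rewrite /Nm expr2; field.
by apply: sqM => //; apply: sqX2.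
Qed.

Lemma fixed_of_nm x : x != 0 -> sq (Nm x) -> sq (sg x / x).
Proof.
move=> x0 h; have -> : sg x / x = Nm x / x ^+ 2 by rewrite /Nm expr2; field.
by apply: sqD => //; apply: sqX2.
Qed.

Lemma Y_sub : submodJ sg Y.
Proof.
split; first split.
- by move=> y [s [t [_ _ /sq_div_nz]]].
- by move=> y hy; exists [::], [::]; split => //; rewrite !big_nil mulr1 divr1.
- move=> x y [s1 [t1 [Bs1 Bt1 h1]]] [s2 [t2 [Bs2 Bt2 h2]]].
  exists (s1 ++ s2), (t1 ++ t2); split; try exact: inB_cat.
  by apply: sq_eq (sq_div2 h1 h2); rewrite !prod_cat; congr (_ / _); ring.
- move=> y [s [t [Bs Bt h]]]; exists t, s; split => //.
  apply: sq_eq (sq_sgdiv h); rewrite rmorphM !sg_prod.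
  have -> : \prod_(b <- t) sg (sg b) = \prod_(b <- t) b by apply: eq_bigr => b _; rewrite sgK.
  by rewrite (mulrC (\prod_(b <- s) sg b)).
Qed.

Lemma Y_M x y : Y x -> Y y -> Y (x * y).
Proof. by case: Y_sub => [[_ _ +] _]; apply. Qed.

Lemma Y_free : freebasis sg Y B.
Proof.
split.
- move=> b Bb; exists [:: b], [::]; split => //; first by move=> c; rewrite inE => /eqP->.
  by rewrite big_seq1 big_nil mulr1 divff ?Bnz //; exact: sq1.
- move=> s t us ut Bs Bt h.
  have := Nm_sq h; rewrite Nm_Yrep => /(indep_perm Bind BnzNm us ut Bs Bt) p.
  have e : (\prod_(b <- s) b) * \prod_(b <- t) sg b = \prod_(b <- s) Nm b.
    by rewrite -(perm_big _ p) -big_split.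
  move: h; rewrite e => /(Bind us Bs) s0; split => //.
  by move: p; rewrite s0 => /perm_size /= /esym /size0nil.
- by move=> x [s [t [Bs Bt h]]]; exists s, t.
Qed.

Lemma Y_fixedJ : fixedJ sg Y = NJ sg.
Proof.
apply/funext => x; apply/propext; split.
  case=> Yx hx; apply: Y_fixed => //; apply: nm_of_fixed => //.
  by case: Yx => s [t [_ _ /sq_div_nz]].
by move=> hx; split; [exact: NJ_Y | exact: NJ_fixed].
Qed.

Variable x0 : K.
Hypothesis x0nz : x0 != 0.
Hypothesis x0G : sq (sg x0 / x0).
Hypothesis x0N : NJ sg x0 -> sq x0.

Definition V1 : set K := [set y | NJ sg y \/ NJ sg (y * x0)].

Lemma V1ok : Vok V1.
Proof.
split; first by move=> y /NJ_sq; left.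
move=> x y [hx|hx] [hy|hy].
- by left; apply: NJ_D.
- right; have y0 : y != 0.
    by have := NJ_nz hy; rewrite mulf_eq0 negb_or => /andP[].
  have -> : x / y * x0 = x / (y * x0) * x0 ^+ 2.
    by rewrite expr2 invfM; field; rewrite ?x0nz ?y0.
  by apply: NJ_M; [apply: NJ_D|apply/NJ_sq/sqX2].
- by right; rewrite mulrAC; apply: NJ_D.
- left; have y0 : y != 0.
    by have := NJ_nz hy; rewrite mulf_eq0 negb_or => /andP[].
  have -> : x / y = x * x0 / (y * x0) by rewrite invfM; field; rewrite ?x0nz ?y0.
  exact: NJ_D.
Qed.

Variable D : set K.
Hypothesis DG : forall d, D d -> d != 0 /\ sq (sg d / d).
Hypothesis Dind : indepV V1 D id.
Hypothesis Dspan : forall x, x != 0 -> sq (sg x / x) -> spanV V1 D id x.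

Definition X : set K := [set y | sq y \/ sq (y / x0)].
Definition Z : set K := spanJ D.

Lemma Dnz : nzon D id.
Proof. by move=> d /DG []. Qed.

Lemma X_sub : submodJ sg X.
Proof.
split; first split.
- by move=> y [/sq_neq0|/sq_div_nz].
- by move=> y hy; left.
- move=> x y [hx|hx] [hy|hy].
  + by left; apply: sqM.
  + by right; rewrite -mulrA; apply: sqM.
  + by right; rewrite mulrAC; apply: sqM.
  + left; have -> : x * y = (x / x0) * (y / x0) * x0 ^+ 2.
      by rewrite expr2; field.
    by apply: sqM; [apply: sqM|apply: sqX2].
- move=> y [hy|hy]; first by left; apply: sg_sq.
  right; rewrite (alg4 _ (b := sg x0)) ?sg_eq0 //.
  by apply: sqM => //; apply: sq_sgdiv.
Qed.

Lemma Z_sub : submodJ sg Z.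
Proof.
split; first split.
- by move=> y [s [_ /sq_div_nz]].
- by move=> y hy; exists [::]; split => //; rewrite big_nil divr1.
- move=> x y [s1 [Bs1 h1]] [s2 [Bs2 h2]].
  exists (s1 ++ s2); split; first exact: inB_cat.
  by apply: sq_eq (sq_div2 h1 h2); rewrite prod_cat.
- move=> y [s [Bs h]]; exists s; split => //.
  have hP := inB_nz Dnz Bs.
  rewrite (alg4 _ (b := sg (\prod_(b <- s) b))) ?sg_eq0 //.
  apply: sqM; first exact: sq_sgdiv.
  rewrite sg_prod -prodf_div; apply: sq_prod => b /Bs /DG [].
  done.
Qed.

Lemma Z_triv : trivialJ sg Z.
Proof.
move=> z [s [Bs h]]; have hP := inB_nz Dnz Bs.
have z0 := sq_div_nz h.
have -> : sg z / z = (sg (z / \prod_(b <- s) b) / (z / \prod_(b <- s) b)) *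
   (sg (\prod_(b <- s) b) / \prod_(b <- s) b).
  rewrite rmorphM fmorphV; field.
  by rewrite hP z0 -sg_eq0 sgK hP.
apply: sqM; first by apply: sqD => //; apply: sg_sq.
rewrite sg_prod -prodf_div; apply: sq_prod => b /Bs /DG [].
done.
Qed.
Lemma X_nm x : X x -> sq (Nm x).
Proof.
case=> h; first exact: Nm_sq.
have -> : Nm x = Nm (x / x0) * Nm x0 by rewrite -(NmM (x / x0) x0) (divfK x0nz).
by apply: sqM; [apply: Nm_sq | apply: nm_of_fixed].
Qed.

Lemma Z_nm z : Z z -> sq (Nm z).
Proof.
move=> hz; apply: nm_of_fixed; last exact: Z_triv.
by case: hz => s [_ /sq_div_nz].
Qed.

Lemma dsum : dsum3 X Y Z.
Proof.
split.
  move=> v v0; have [s [Bs hs]] := Bspan v0.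
  have hP := inB_nz Bnzid Bs.
  set y := \prod_(b <- s) b.
  have Yy : Y y.
    exists s, [::]; split => //; rewrite big_nil mulr1 divff //; exact: sq1.
  set w := v / y.
  have w0 : w != 0 by rewrite mulf_neq0 // invr_eq0.
  have hw : sq (sg w / w).
    apply: fixed_of_nm => //; rewrite /w NmD Nm_prod; exact: hs.
  have [u [Du hu]] := Dspan w0 hw.
  have hU := inB_nz Dnz Du.
  set z := \prod_(b <- u) b.
  have Zz : Z z by exists u; split => //; rewrite divff //; exact: sq1.
  set r := w / z.
  have er : v = y * r * z by rewrite /r /w; field; rewrite ?hP ?hU.
  case: hu => [hr|hr].
    exists 1, (y * r), z; split => //; first by left; exact: sq1.
      by apply: Y_M => //; apply: NJ_Y.
    by rewrite mul1r.
  exists x0^-1, (y * (r * x0)), z; split => //.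
  - right; rewrite -[x0^-1 / x0]expr2; apply: sqX2; by rewrite invr_eq0.
  - by apply: Y_M => //; apply: NJ_Y.
  - by rewrite er; field.
move=> x y z Xx Yy Zz h.
have x0' : x != 0 by case: Xx => [/sq_neq0|/sq_div_nz].
have y0 : y != 0 by case: Yy => s [t [_ _ /sq_div_nz]].
have z0 : z != 0 by case: Zz => s [_ /sq_div_nz].
have NJy : NJ sg y.
  apply: Y_fixed => //.
  have -> : Nm y = Nm (x * y * z) / (Nm x * Nm z).
    rewrite !NmM; field.
    by rewrite !Nm_eq0 x0' z0.
  by apply: sqD; [apply: Nm_sq | apply: sqM; [apply: X_nm | apply: Z_nm]].
have sqz : sq z.
  case: Zz => u0 [Du0 hu0].
  have [u [uu Du _ hu]] := normalize Dnz Du0.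
  have hU0 := inB_nz Dnz Du0; have hU := inB_nz Dnz Du.
  have hzu : sq (z / \prod_(b <- u) b).
    by rewrite (alg4 _ (b := \prod_(b <- u0) id b)) //; apply: sqM.
  suff V1u : V1 (\prod_(b <- u) id b).
    by move: (Dind uu Du V1u) hzu => ->; rewrite big_nil divr1.
  case: Xx => hx.
    left; have -> : \prod_(b <- u) id b = (x * y * z) / (x * y) / (z / \prod_(b <- u) b).
      by field; rewrite x0' y0 z0 hU.
    apply: NJ_D; last exact: NJ_sq.
    apply: (NJ_sqM (x := (x * y)^-1)).
      by apply: NJ_V; apply: (NJ_sqM (x := y)) => //; rewrite mulfK.
    by apply: sq_eq h; field; rewrite ?x0' ?y0 ?oner_neq0.
  right; have -> : \prod_(b <- u) id b * x0 =
      (x * y * z) / (x / x0) / y / (z / \prod_(b <- u) b).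
    by field; rewrite x0' y0 z0 hU x0nz.
  apply: NJ_D; last exact: NJ_sq.
  apply: NJ_D => //; apply: NJ_sq; exact: sqD.
have hxy : sq (x * y) by apply: (sq_cancel sqz); rewrite [z * _]mulrC.
case: Xx => hx.
  by split => //; apply: sq_cancel hx hxy.
have sx0 : sq x0.
  apply: x0N; apply: (NJ_sqM (x := y^-1)); first exact: NJ_V.
  by apply: sq_eq (sqD hxy hx); field; rewrite ?x0' ?y0 ?x0nz ?oner_neq0.
have sx : sq x by rewrite -(divfK x0nz x); apply: sqM.
by split => //; apply: sq_cancel sx hxy.
Qed.

Lemma X_basis : ~ sq x0 -> F2basis X [set x0].
Proof.
move=> nsq; split.
- by move=> y ->; right; rewrite divff //; exact: sq1.
- move=> s us Bs hs; case: s us Bs hs => [//|a [|b s]] us Bs hs.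
    by exfalso; apply: nsq; move: hs; rewrite big_seq1 (Bs a (mem_head _ _)).
  have ea : a = x0 := Bs a (mem_head _ _).
  have eb : b = x0 by apply: Bs; rewrite !inE eqxx orbT.
  by move: us; rewrite ea eb /= inE eqxx.
- move=> y [hy|hy].
    by exists [::]; split => //; rewrite big_nil divr1.
  exists [:: x0]; split; first by move=> c; rewrite inE => /eqP->.
  by rewrite big_seq1.
Qed.

Lemma X_zero : x0 = 1 -> zeroJ X.
Proof. by move=> e y [//|]; rewrite e divr1. Qed.

End Main.
Section Card.
Local Open Scope nat_scope.
Local Open Scope classical_set_scope.
Local Open Scope card_scope.

Lemma card_le_fun T U (A : set T) (B : set U) (f : T -> U) :
  (forall x, A x -> B (f x)) -> (forall x y, A x -> A y -> f x = f y -> x = y) -> A #<= B.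
Proof.
move=> hf hi; have [F] : $|{injfun A >-> B}|.
  apply/injfunPex; exists f => // x y; rewrite !inE; exact: hi.
exact: inj_card_le.
Qed.

Lemma nat_inj (T : pointedType) (A : set T) : [set: nat] #<= A ->
  exists e : nat -> T, (forall n, A (e n)) /\ injective e.
Proof.
move=> /pcard_leP [f]; exists f; split; first by move=> n; apply: funS.
by move=> x y h; apply: (inj (f:=f)); rewrite ?inE.
Qed.

Lemma pair_inj : exists pr : nat * nat -> nat, injective pr.
Proof.
have := card_nat2; rewrite card_eq_le => /andP[h _].
move: h => /pcard_leP [f]; exists f => x y hxy.
by apply: (inj (f:=f)); rewrite ?inE.
Qed.

Definition gdom T (G : set ((T * nat) * T)) : set T :=
  [set a | exists n b, G ((a, n), b)].

Definition Pgr T (C : set T) (G : set ((T * nat) * T)) : Prop :=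
  [/\ (forall p b1 b2, G (p, b1) -> G (p, b2) -> b1 = b2),
      (forall p1 p2 b, G (p1, b) -> G (p2, b) -> p1 = p2),
      (forall a n, gdom G a -> exists b, G ((a, n), b)),
      (forall p b, G (p, b) -> gdom G b) &
      (forall a, gdom G a -> C a)].

Lemma infinite_prod (T : Type) (C : set T) : infinite_set C ->
  (C `*` [set: nat]) #<= C.
Proof.
elim/Ppointed: T => T in C *.
  by move=> h; exfalso; apply: h; rewrite empty_eq0; exact: finite_set0.
move=> Cinf.
have [pr prI] := pair_inj.
have : exists G0, Pgr C G0 /\ forall G, G0 `<` G -> ~ Pgr C G.
  apply: Zorn_bigcup => F FP tot.
  have cmp : forall G1 G2, F G1 -> F G2 -> exists G, [/\ F G, G1 `<=` G & G2 `<=` G].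
    move=> G1 G2 F1 F2; case: (tot _ _ F1 F2) => h.
      by exists G2; split.
    by exists G1; split.
  split.
  - move=> p b1 b2 [G1 F1 h1] [G2 F2 h2].
    have [G [FG s1 s2]] := cmp _ _ F1 F2.
    by case: (FP _ FG) => fn _ _ _ _; apply: (fn p); [apply: s1|apply: s2].
  - move=> p1 p2 b [G1 F1 h1] [G2 F2 h2].
    have [G [FG s1 s2]] := cmp _ _ F1 F2.
    by case: (FP _ FG) => _ fi _ _ _; apply: (fi _ _ b); [apply: s1|apply: s2].
  - move=> a n [m [b [G1 F1 h1]]].
    case: (FP _ F1) => _ _ ft _ _.
    have [b' hb'] := ft a n (ex_intro _ m (ex_intro _ b h1)).
    by exists b'; exists G1.
  - move=> p b [G1 F1 h1]; case: (FP _ F1) => _ _ _ fim _.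
    have [m [b' hb']] := fim _ _ h1.
    by exists m, b'; exists G1.
  - move=> a [m [b [G1 F1 h1]]]; case: (FP _ F1) => _ _ _ _ fC.
    by apply: fC; exists m, b.
move=> [G0 [[fn fi ft fim fC] mx]].
set A := gdom G0.
have fin : finite_set (C `\` A).
  apply: contrapT => inf.
  have [e [eC eI]] := nat_inj (proj1 (infiniteP _) inf).
  pose G' := G0 `|` [set q | exists k n, q = ((e k, n), e (pr (k, n)))].
  have eA : forall k, ~ A (e k) by move=> k; case: (eC k).
  apply: (mx G').
    split; first by move=> q h; left.
    move=> /(_ ((e 0, 0), e (pr (0, 0)))) h.
    have : G0 ((e 0%N, 0%N), e (pr (0%N, 0%N))) by apply: h; right; exists 0%N, 0%N.
    by move=> g; apply: (eA 0%N); exists 0%N, (e (pr (0%N, 0%N))).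
  have dom' : forall a, gdom G' a -> A a \/ exists k, a = e k.
    move=> a [n [b [h|[k [m [e1]]]]]].
      by left; exists n, b.
    by right; exists k; case: e1.
  split.
  - move=> [a n] b1 b2 [h1|[k1 [m1 e1]]] [h2|[k2 [m2 e2]]].
    + exact: fn h1 h2.
    + by exfalso; case: e2 => ea _ _; apply: (eA k2); rewrite -ea; exists n, b1.
    + by exfalso; case: e1 => ea _ _; apply: (eA k1); rewrite -ea; exists n, b2.
    + case: e1 => ea1 en1 eb1; case: e2 => ea2 en2 eb2.
      have kk : k1 = k2 by apply: eI; rewrite -ea1 -ea2.
      by rewrite eb1 eb2 kk -en1 -en2.
  - move=> p1 p2 b [h1|[k1 [m1 e1]]] [h2|[k2 [m2 e2]]].
    + exact: fi h1 h2.
    + by exfalso; case: e2 => _ eb; apply: (eA (pr (k2, m2))); rewrite -eb; apply: fim h1.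
    + by exfalso; case: e1 => _ eb; apply: (eA (pr (k1, m1))); rewrite -eb; apply: fim h2.
    + case: e1 => ep1 eb1; case: e2 => ep2 eb2; rewrite ep1 ep2.
      by have := prI _ _ (eI _ _ (etrans (esym eb1) eb2)); case=> -> ->.
  - move=> a n /dom' [Aa|[k ->]].
      by have [b hb] := ft a n Aa; exists b; left.
    by exists (e (pr (k, n))); right; exists k, n.
  - move=> p b [h|[k [m [_ ->]]]].
      by have [n [b' hb']] := fim _ _ h; exists n, b'; left.
    by exists 0%N, (e (pr (pr (k, m), 0%N))); right; exists (pr (k, m)), 0%N.
  - move=> a /dom' [Aa|[k ->]]; [exact: fC | by case: (eC k)].
have [r er] := (proj1 (finite_seqP _)) fin.
have [a0 Aa0] : exists a, A a.
  apply: contrapT => nA; apply: Cinf.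
  have -> : C = C `\` A by apply/funext => c; apply/propext; split => [Cc|[]//]; split => // Ac; apply: nA; exists c.
  exact: fin.
have [F0 hF0] : {F0 : T * nat -> T & forall p, A p.1 -> G0 (p, F0 p)}.
  apply: (@choice _ _ (fun p b => A p.1 -> G0 (p, b))) => -[a n]; case: (pselect (A a)) => Aa.
    by have [b hb] := ft a n Aa; exists b.
  by exists a.
have F0P : forall a n, A a -> G0 ((a, n), F0 (a, n)).
  by move=> a n Aa; apply: (hF0 (a, n)).
pose h (q : T * nat) : T := if `[< A q.1 >] then F0 (q.1, pr (0%N, q.2))
                          else F0 (a0, pr ((index q.1 r).+1, q.2)).
apply: (card_le_fun (f := h)).
  move=> [c n] [/= Cc _]; rewrite /h /=; case: (asboolP (A c)) => [Ac|_].
    by apply: fC; apply: fim (F0P _ _ Ac).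
  by apply: fC; apply: fim (F0P _ _ Aa0).
move=> [c1 n1] [c2 n2] [/= C1 _] [/= C2 _]; rewrite /h /=.
have key : forall a1 a2 m1 m2, A a1 -> A a2 -> F0 (a1, m1) = F0 (a2, m2) ->
    a1 = a2 /\ m1 = m2.
  move=> a1 a2 m1 m2 A1 A2 e; have := fi _ _ _ (F0P _ m1 A1).
  by rewrite e => /(_ _ (F0P _ m2 A2)) [].
have inr : forall c, C c -> ~ A c -> c \in r.
  by move=> c Cc nAc; have : (C `\` A) c by []; rewrite er.
case: (asboolP (A c1)) => [A1|nA1]; case: (asboolP (A c2)) => [A2|nA2].
- by move=> /(key _ _ _ _ A1 A2) [-> /prI [->]].
- by move=> /(key _ _ _ _ A1 Aa0) [_ /prI [] //].
- by move=> /(key _ _ _ _ Aa0 A2) [_ /prI [] //].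
move=> /(key _ _ _ _ Aa0 Aa0) [_ /prI [ei ->]].
have r1 := inr _ C1 nA1; have r2 := inr _ C2 nA2.
by rewrite -(nth_index a0 r1) -(nth_index a0 r2) ei.
Qed.

End Card.
Section CardSpan.
Variable K : fieldType.
Implicit Types (B C : set K) (f g : K -> K).

Lemma span_prod C g f (s : seq K) : nzon C g ->
  (forall b, b \in s -> spanV (@sq K) C g (f b)) ->
  spanV (@sq K) C g (\prod_(b <- s) f b).
Proof.
move=> nz; elim: s => [|b s IH] h.
  by exists [::]; split => //; rewrite !big_nil divr1; exact: sq1.
have [t1 [Ct1 h1]] := h b (mem_head _ _).
have [t2 [Ct2 h2]] : spanV (@sq K) C g (\prod_(b <- s) f b).
  by apply: IH => c cs; apply: h; rewrite in_cons cs orbT.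
exists (t1 ++ t2); split; first exact: inB_cat.
by rewrite big_cons prod_cat; apply: sq_div2.
Qed.

Lemma sq_ratio (a b c : K) : c != 0 -> sq (a / c) -> sq (b / c) -> sq (a * b).
Proof.
move=> c0 ha hb; have -> : a * b = (a / c) * (b / c) * c ^+ 2 by rewrite expr2; field.
by apply: sqM; [apply: sqM|apply: sqX2].
Qed.

Lemma option_inj (B : set K) : infinite_set B ->
  exists e : nat -> K, (forall n, B (e n)) /\ injective e.
Proof.
move=> inf.
have inf' : infinite_set (some @` B).
  by move=> fin; apply: inf; rewrite -(eq_finite_set card_some).
have [e [eB eI]] := nat_inj (proj1 (infiniteP _) inf').
exists (fun n => odflt 0 (e n)); split.
  by move=> n; case: (eB n) => b Bb <-.
move=> n1 n2 /= h; apply: eI.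
by case: (eB n1) => b1 _ e1; case: (eB n2) => b2 _ e2; move: h; rewrite -e1 -e2 /= => ->.
Qed.

Lemma card_le_span B C f g : indepV (@sq K) B f -> nzon B f -> nzon C g ->
  (forall b, B b -> spanV (@sq K) C g (f b)) ->
  (forall c, C c -> spanV (@sq K) B f (g c)) -> (B #<= C)%card.
Proof.
move=> ind nzB nzC hBC hCB.
case: (pselect (finite_set C)) => finC; last first.
  have [S hS] : {S : K -> seq K & forall c, C c ->
      [/\ uniq (S c), inB B (S c) & sq (g c / \prod_(b <- S c) f b)]}.
    apply: (@choice _ _ (fun c s => C c -> [/\ uniq s, inB B s &
        sq (g c / \prod_(b <- s) f b)])) => c.
    case: (pselect (C c)) => Cc; last by exists [::].
    have [t [Bt ht]] := hCB c Cc; have [u [uu Bu _ hu]] := normalize nzB Bt.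
    exists u => _; split => //.
    rewrite (alg4 _ (b := \prod_(b <- t) f b)); last exact: inB_nz nzB Bt.
    exact: sqM.
  have cov : forall b, B b -> exists c, C c /\ b \in S c.
    move=> b Bb; have [t [Ct ht]] := hBC b Bb.
    pose L := flatten (map S t).
    have BL : inB B L.
      move=> b' /flattenP [s' /mapP [c ct ->]] bs'.
      by have [_ + _] := hS c (Ct _ ct); apply.
    have hL : sq (\prod_(c <- t) g c / \prod_(b <- L) f b).
      rewrite big_flatten big_map -prodf_div; apply: sq_prod => c ct.
      by have [_ _] := hS c (Ct _ ct).
    have [u [uu Bu uL hu]] := normalize nzB BL.
    have hPt := inB_nz nzC Ct; have hPL := inB_nz nzB BL; have hPu := inB_nz nzB Bu.
    have hbu : sq (f b / \prod_(b <- u) f b).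
      rewrite (alg4 _ (b := \prod_(c <- t) g c)) //.
      rewrite (alg4 (\prod_(c <- t) g c) (b := \prod_(b <- L) f b)) //.
      by apply: sqM => //; apply: sqM.
    have : sq (\prod_(b0 <- [:: b]) f b0 * \prod_(b0 <- u) f b0).
      by rewrite big_seq1; apply: (sq_ratio hPu hbu); rewrite divff //; exact: sq1.
    have Bb1 : inB B [:: b] by move=> c; rewrite inE => /eqP ->.
    move=> /(indep_perm ind nzB (s := [:: b]) (t := u) isT uu Bb1 Bu) p.
    have : b \in u by rewrite -(perm_mem p) mem_head.
    move=> /uL /flattenP [s' /mapP [c ct ->]] bc.
    by exists c; split => //; apply: Ct.
  have [phi hphi] : {phi : K -> K & forall b, B b -> C (phi b) /\ b \in S (phi b)}.
    apply: (@choice _ _ (fun b c => B b -> C c /\ b \in S c)) => b.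
    case: (pselect (B b)) => Bb; last by exists 0.
    by have [c hc] := cov b Bb; exists c.
  apply: (card_le_trans (B := C `*` [set: nat])); last exact: infinite_prod.
  apply: (card_le_fun (f := fun b => (phi b, index b (S (phi b))))).
    by move=> b Bb; split => //=; case: (hphi b Bb).
  move=> b1 b2 B1 B2 [e1 e2].
  have [_ m1] := hphi b1 B1; have [_ m2] := hphi b2 B2.
  by rewrite -(nth_index 0 m1) -(nth_index 0 m2) e2 e1.
have [sc0 esc] := (proj1 (finite_seqP _)) finC.
set sc := undup sc0.
have usc : uniq sc by apply: undup_uniq.
have memC : forall c, C c <-> c \in sc.
  by move=> c; rewrite mem_undup esc.
set m := size sc.
have count : forall s, uniq s -> inB B s -> (size s <= m)%N.
  move=> s us Bs; set n := size s.
  pose sA (A : {set 'I_n}) := map (fun i : 'I_n => nth 0 s i) (enum A).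
  have usA : forall A, uniq (sA A).
    move=> A; rewrite map_inj_in_uniq ?enum_uniq // => i j _ _ /eqP.
    by rewrite nth_uniq // => /eqP /val_inj.
  have BsA : forall A, inB B (sA A).
    by move=> A b /mapP [i _ ->]; apply: Bs; apply: mem_nth.
  have ex : forall A, exists T : {set 'I_m},
      sq (\prod_(b <- sA A) f b / \prod_(j in T) g (nth 0 sc j)).
    move=> A; have [t [Ct ht]] := span_prod nzC (fun b bs => hBC b (BsA A b bs)).
    have [u [uu Cu _ hu]] := normalize nzC Ct.
    exists [set j : 'I_m | nth 0 sc j \in u]%SET.
    have -> : \prod_(j in [set j : 'I_m | nth 0 sc j \in u]%SET) g (nth 0 sc j) =
        \prod_(c <- u) g c.
      rewrite -big_enum /= -(big_map (fun j : 'I_m => nth 0 sc j) xpredT g).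
      apply: perm_big; apply: uniq_perm => //.
        rewrite map_inj_in_uniq ?enum_uniq // => i j _ _ /eqP.
        by rewrite nth_uniq // => /eqP /val_inj.
      move=> c; apply/mapP/idP => [[j]|cu].
        by rewrite mem_enum inE => + ->.
      have cs : c \in sc by apply/memC; apply: Cu.
      have im : (index c sc < m)%N by rewrite index_mem.
      exists (Ordinal im) => /=.
        by rewrite mem_enum inE /= nth_index.
      by rewrite nth_index.
    rewrite (alg4 _ (b := \prod_(b <- t) g b)); last exact: inB_nz nzC Ct.
    by apply: sqM.
  have [phi hphi] : {phi : {set 'I_n} -> {set 'I_m} & forall A,
      sq (\prod_(b <- sA A) f b / \prod_(j in phi A) g (nth 0 sc j))}.
    exact: (choice ex).
  have phiI : injective phi.
    move=> A1 A2 e.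
    have h1 := hphi A1; have h2 := hphi A2; rewrite -e in h2.
    have hP : \prod_(j in phi A1) g (nth 0 sc j) != 0.
      rewrite -big_enum /= -(big_map (fun j : 'I_m => nth 0 sc j) xpredT g).
      by apply: prod_neq0 => c /mapP [j _ ->]; apply: nzC; apply/memC; exact: mem_nth.
    have := indep_perm ind nzB (usA A1) (usA A2) (BsA A1) (BsA A2) (sq_ratio hP h1 h2).
    move=> /perm_mem pm; apply/setP => i.
    have := pm (nth 0 s i); rewrite /sA.
    have ninj : injective (fun i0 : 'I_n => nth 0 s i0).
      by move=> j1 j2 /eqP; rewrite nth_uniq // => /eqP /val_inj.
    have key : forall A : {set 'I_n}, (nth 0 s i \in map (fun i0 : 'I_n => nth 0 s i0) (enum A)) = (i \in A).
      by move=> A; have := mem_map ninj (enum A) i; rewrite mem_enum.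
    by rewrite !key.
  have := leq_card phi phiI.
  by rewrite -!cardsT -!powersetT !card_powerset !cardsT !card_ord leq_exp2l.
have finB : finite_set B.
  apply: contrapT => /option_inj [e [eB eI]].
  have hu : uniq (map e (iota 0 m.+1)) by rewrite map_inj_uniq // iota_uniq.
  have hB : inB B (map e (iota 0 m.+1)) by move=> b /mapP [k _ ->].
  by have := count _ hu hB; rewrite size_map size_iota ltnn.
have [sb0 esb] := (proj1 (finite_seqP _)) finB.
set sb := undup sb0.
have memB : forall b, B b <-> b \in sb by move=> b; rewrite mem_undup esb.
have hsb : (size sb <= m)%N.
  by apply: count; [apply: undup_uniq | move=> b /memB].
apply: (card_le_fun (f := fun b => nth 0 sc (index b sb))).
  move=> b /memB bs; apply/memC; apply: mem_nth.
  by apply: leq_trans hsb; rewrite index_mem.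
move=> b1 b2 /memB B1 /memB B2 /eqP; rewrite nth_uniq //.
- by move=> /eqP e; rewrite -(nth_index 0 B1) -(nth_index 0 B2) e.
- by apply: leq_trans hsb; rewrite index_mem.
- by apply: leq_trans hsb; rewrite index_mem.
Qed.

End CardSpan.
Section Parts.
Variables (K : fieldType) (sg : {rmorphism K -> K}).
Hypothesis sgK : forall x, sg (sg x) = x.

Lemma sqok : Vok (@sq K).
Proof. by split => // x y; apply: sqD. Qed.

Lemma maxfree_basis W Bw : maxfreeJ sg W -> freebasis sg W Bw ->
  [/\ (forall b, Bw b -> b != 0), indepV (@sq K) Bw (Nm sg) &
      forall g, g != 0 -> spanV (@sq K) Bw (Nm sg) (Nm sg g)].
Proof.
move=> [[[[Wnz _ _] _] _] mx] [BW ind2 span2].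
have Bnz : forall b, Bw b -> b != 0 by move=> b /BW /Wnz.
have nzN : nzon Bw (Nm sg) by move=> b /Bnz; rewrite Nm_eq0.
have ind : indepV (@sq K) Bw (Nm sg).
  move=> s us Bs h.
  have [] := ind2 s s us us Bs Bs; last done.
  by move: h; rewrite /Nm big_split.
split => // g g0; apply: contrapT => nsp.
pose B' := Bw `|` [set g].
have ind' : indepV (@sq K) B' (Nm sg) by apply: indep_add => //; apply: sqok.
have nz' : forall b, B' b -> b != 0 by move=> b [/Bnz|-> //].
have fr : freeJ sg (Y sg B').
  split; first exact: Y_sub.
  by exists B'; apply: Y_free.
have WY : W `<=` Y sg B'.
  move=> w /span2 [s [t [Bs Bt h]]]; exists s, t; split => //.
  - by move=> b /Bs; left.
  - by move=> b /Bt; left.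
have e := mx _ fr WY.
have : Y sg B' g by case: (Y_free sgK nz' ind') => + _ _; apply; right.
rewrite e => /span2 [s [t [Bs Bt h]]].
apply: nsp; exists (s ++ t); split; first exact: inB_cat.
have := Nm_sq sg h; rewrite NmD Nm_Yrep //.
by rewrite prod_cat.
Qed.

Lemma part2 W Bw C : maxfreeJ sg W -> freebasis sg W Bw ->
  F2basis (NJ sg) C -> (Bw #= C)%card.
Proof.
move=> mW fW [CN Cind Cspan].
have [Bnz ind spanB] := maxfree_basis mW fW.
have nzN : nzon Bw (Nm sg) by move=> b /Bnz; rewrite Nm_eq0.
have nzC : nzon C id by move=> c /CN /NJ_nz.
have hCB : forall c, C c -> spanV (@sq K) Bw (Nm sg) c.
  move=> c /CN [g [g0 hg]]; have [s [Bs hs]] := spanB g g0.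
  exists s; split => //.
  rewrite (alg4 _ (b := Nm sg g)); last by rewrite Nm_eq0.
  exact: sqM.
have hBC : forall b, Bw b -> spanV (@sq K) C id (Nm sg b).
  by move=> b Bb; apply: Cspan; apply: NJ_Nm => //; apply: Bnz.
apply: Cantor_Bernstein.
  by apply: (card_le_span (f := Nm sg) (g := id)).
by apply: (card_le_span (f := id) (g := Nm sg)).
Qed.

Lemma part1 (x0 : K) : x0 != 0 -> sq (sg x0 / x0) -> (NJ sg x0 -> sq x0) ->
  exists X Y Z : set K,
    [/\ submodJ sg X, submodJ sg Y, submodJ sg Z & dsum3 X Y Z] /\
    [/\ (~ sq x0 -> F2basis X [set x0]) /\ (x0 = 1 -> zeroJ X),
        (exists B, freebasis sg Y B) /\ fixedJ sg Y = NJ sg &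
        trivialJ sg Z].
Proof.
move=> x0nz x0G x0N.
have nzS : nzon [set g : K | g != 0] (Nm sg) by move=> b b0; rewrite Nm_eq0.
have [B [BS Bind Bspan]] := zorn_basis sqok nzS.
have Bnz : forall b, B b -> b != 0 := BS.
have nzG : nzon [set x : K | x != 0 /\ sq (sg x / x)] id by move=> b [].
have [D [DS Dind Dspan]] := zorn_basis (V1ok sg x0nz) nzG.
have DG : forall d, D d -> d != 0 /\ sq (sg d / d) := DS.
have Dspan' : forall x, x != 0 -> sq (sg x / x) -> spanV (V1 sg x0) D id x.
  by move=> x x1 x2; apply: (Dspan x).
exists (X x0), (Y sg B), (Z D); split.
  split.
  - exact: X_sub.
  - exact: Y_sub.
  - exact: Z_sub.
  - exact: (dsum sgK Bnz Bind Bspan x0nz x0G x0N DG Dind Dspan').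
split.
- by split; [exact: X_basis | exact: X_zero].
- by split; [exists B; exact: Y_free | exact: Y_fixedJ].
- exact: Z_triv.
Qed.

End Parts.
Lemma exc_elem (K : fieldType) (sg : {rmorphism K -> K}) (sqa : K) :
  (forall x, sg (sg x) = x) -> (2%:R != 0 :> K) -> sqa != 0 -> sg sqa = - sqa ->
  minus1_norm sg -> exists x0 : K, [/\ x0 != 0, sq (sg x0 / x0) & ~ NJ sg x0].
Proof.
move=> sgK two sqa0 sgsqa [g [g0 hg]].
set u := g ^+ 2.
have nu : u * sg u = 1.
  by rewrite /u rmorphXn -exprMn hg expr2 mulrNN mulr1.
have [x0 [x00 hx0]] : exists x0 : K, x0 != 0 /\ sg x0 = u * x0.
  case: (eqVneq u (-1)) => eu.
    by exists sqa; split => //; rewrite sgsqa eu mulN1r.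
  exists (1 + sg u); split.
    apply: contra_neq eu => e.
    have : sg u = -1 by rewrite -(addKr 1 (sg u)) e addr0.
    by move=> /(congr1 sg); rewrite sgK rmorphN rmorph1.
  by rewrite rmorphD rmorph1 sgK mulrDr mulr1 nu addrC.
exists x0; split => //.
  by rewrite hx0 mulfK //; apply: sqX2.
case=> h [h0 [e [e0 he]]].
set N := h * sg h.
have N0 : N != 0 by rewrite mulf_neq0 // fmorph_eq0.
have sN : sg N = N by rewrite /N rmorphM sgK mulrC.
have ex0 : x0 = N * e ^+ 2 by rewrite -he mulrC divfK.
have h1 : N * sg e ^+ 2 = N * (g * e) ^+ 2.
  by have := hx0; rewrite ex0 rmorphM sN rmorphXn => ->; rewrite /u exprMn; ring.
have hse := mulfI N0 h1.
have ee : e = - e.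
  move: hse => /eqP; rewrite eqf_sqr => /orP [] /eqP hs.
    have := congr1 sg hs; rewrite sgK rmorphM hs mulrA (mulrC (sg g)) hg.
    by rewrite mulN1r.
  have := congr1 sg hs; rewrite sgK rmorphN rmorphM hs mulrN mulrA (mulrC (sg g)) hg.
  by rewrite mulN1r opprK.
have : (2%:R : K) * e = 0 by rewrite mulr2n mulrDl mul1r {2}ee subrr.
by move/eqP; rewrite mulf_eq0 (negbTE two) (negbTE e0).
Qed.

Theorem theorem2 (F : fieldType) (K : fieldExtType F) (a : F) (sqa : K)
    (sigma : {rmorphism K -> K}) :
  (2%:R != 0 :> F) ->
  a != 0 -> ~ (exists b : F, b ^+ 2 = a) ->
  sqa ^+ 2 = a%:A -> (<<1%AS; sqa>>)%VS = fullv ->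
  (forall c : F, sigma c%:A = c%:A) -> sigma sqa = - sqa ->
  (exists X Y Z : set K,
    [/\ submodJ sigma X, submodJ sigma Y, submodJ sigma Z & dsum3 X Y Z] /\
    [/\ (minus1_norm sigma -> exists x0, F2basis X [set x0]) /\
        (~ minus1_norm sigma -> zeroJ X),
        (exists B, freebasis sigma Y B) /\ fixedJ sigma Y = NJ sigma &
        trivialJ sigma Z]) /\
  (forall W B C, maxfreeJ sigma W -> freebasis sigma W B ->
     F2basis (NJ sigma) C -> (B #= C)%card).
Proof.
move=> two a0 _ sqa2 full fixF sgsqa.
have inj0 : forall c : F, (c%:A == 0 :> K) = (c == 0).
  by move=> c; rewrite -in_algE fmorph_eq0.
have twoK : (2%:R != 0 :> K).
  have e2 : (2%:R : F)%:A = (2%:R : K) by rewrite -in_algE rmorph_nat.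
  by rewrite -e2 inj0.
have sqa0 : sqa != 0.
  apply: contra_neq a0 => e; apply/eqP; rewrite -inj0 -sqa2 e expr2 mul0r.
  by [].
have hor : forall p : {poly K}, p \is a polyOver 1%VS -> forall z, sigma p.[z] = p.[sigma z].
  move=> p /polyOver1P [q ->] z.
  rewrite -horner_map -map_poly_comp; congr (_.[_]).
  by apply: eq_map_poly => c /=; rewrite ?in_algE fixF.
have sgK : forall x, sigma (sigma x) = x.
  move=> x; have : x \in <<1%AS; sqa>>%VS by rewrite full memvf.
  move=> /Fadjoin_polyP [p pO ->].
  by rewrite !hor // sgsqa rmorphN sgsqa opprK.
split; last by move=> W B C; apply: part2.
case: (pselect (minus1_norm sigma)) => m1.
  have [x0 [x00 x0G nN]] := exc_elem sgK twoK sqa0 sgsqa m1.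
  have nsq : ~ sq x0 by move=> /NJ_sq.
  have [X [Y [Z [H1 [[Hb _] H2 H3]]]]] := part1 sgK x00 x0G (fun h => False_ind _ (nN h)).
  exists X, Y, Z; split; first exact: H1.
  split; [split | exact: H2 | exact: H3].
    by move=> _; exists x0; apply: Hb.
  by move=> h; exfalso; exact: h m1.
have x00 : (1 : K) != 0 := oner_neq0 _.
have x0G : sq (sigma 1 / 1) by rewrite rmorph1 divr1; exact: sq1.
have [X [Y [Z [H1 [[_ Hz] H2 H3]]]]] := part1 sgK x00 x0G (fun _ => sq1 K).
exists X, Y, Z; split; first exact: H1.
split; [split | exact: H2 | exact: H3].
  by move=> h; exfalso; exact: m1 h.
by move=> _; apply: Hz.
Qed.
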